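(* Let $(X,\perp,Y,T)$ be an implicative frame, and let $x,z\in X$ be arbitrary. Then: (1) $\Gamma x\cap\Gamma z\subseteq\Gamma x\odot\Gamma z$ iff $R_\le xz\subseteq R^{111}xz$; (2) $\Gamma x\odot\Gamma z\subseteq\Gamma x\cap\Gamma z$ iff $R^{111}xz\subseteq R_\le xz$; (3) the algebra $(\mathcal{G}(X),\subseteq,\cap,\vee,\bot,X,\Rightarrow)$ is a complete Heyting algebra in which $\Rightarrow$ is the residual of intersection iff $R^{111}xz=R_\le xz$ for all $x,z\in X$.
   Context: A sorted frame (polarity) is a triple $(X,\perp,Y)$ with $X,Y$ nonempty sets and ${\perp}\subseteq X\times Y$. For $U\subseteq X$ let $U'=\{y\in Y:\forall x\in U\ x\perp y\}$, and for $V\subseteq Y$ let ${}'V=\{x\in X:\forall y\in V\ x\perp y\}$. $A\subseteq X$ is stable if $A={}'(A')$; $B\subseteq Y$ co-stable if $B=({}'B)'$. $\mathcal{G}(X)$, $\mathcal{G}(Y)$ are the complete lattices of stable, resp. co-stable, sets (meets are intersections; joins are closures of unions: ${}'(W')$ for $W\subseteq X$, $W''=({}'W)'$ for $W\subseteq Y$); $\bot$ is the least stable set. Preorders: $x\le z$ iff $\{x\}'\subseteq\{z\}'$ on $X$; $y\le v$ iff ${}'\{y\}\subseteq{}'\{v\}$ on $Y$; separated means both are partial orders. $\Gamma u$ is the set of elements above $u$. For $T\subseteq Y\times X\times Y$, $T'\subseteq X\times X\times Y$ is $uT'xv$ iff $\forall y\,(yTxv\Rightarrow u\perp y)$. An implicative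 frame is $(X,\perp,Y,T)$ with: (F0) $x\perp y$ iff $uT'xy$ for all $u\in X$; (F1) separated; (F2) each $\{y: yTxv\}$ equals $\Gamma w$ for some $w\in Y$; (F3) if $yTxv$, $x_1\le x$, $v_1\le v$ then $yTx_1v_1$; (F4) for all $u,x\in X,v\in Y$, $\{x_1:uT'x_1v\}$ is stable and $\{v_1:uT'xv_1\}$ is co-stable. Derived relations: $vR^{\partial11}zx$ iff $xT'zv$; $uR^{111}zx$ iff $\forall v\in Y(vR^{\partial11}zx\Rightarrow u\perp v)$; $R^{111}xz=\{u\in X:uR^{111}xz\}$. Upper bound relation: $uR_\le xz$ iff $x\le u$ and $z\le u$, and $R_\le xz=\{u:uR_\le xz\}$. Operations: $A\blacktriangleright B=(\{y:\exists x\in A\,\exists v\in B\ yTxv\})''$; $A\Rightarrow C={}'(A\blacktriangleright C')$; $A\odot F={}'(\{u:\exists x_1\in A\,\exists z_1\in F\ uR^{111}x_1z_1\}')$. *)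

(* Defs.v *)
Set Implicit Arguments.

Section Frames.
Variables (X Y : Type) (perp : X -> Y -> Prop).

Definition incl {Z : Type} (A B : Z -> Prop) : Prop := forall a, A a -> B a.
Definition cap {Z : Type} (A B : Z -> Prop) : Z -> Prop := fun a => A a /\ B a.
Definition seteq {Z : Type} (A B : Z -> Prop) : Prop := forall a, A a <-> B a.

Definition upper (U : X -> Prop) : Y -> Prop := fun y => forall x, U x -> perp x y.
Definition lower (V : Y -> Prop) : X -> Prop := fun x => forall y, V y -> perp x y.

Definition stable (A : X -> Prop) : Prop := seteq A (lower (upper A)).
Definition costable (B : Y -> Prop) : Prop := seteq B (upper (lower B)).

Definition leX (x z : X) : Prop := forall y, perp x y -> perp z y.
Definition leY (y v : Y) : Prop := forall x, perp x y -> perp x v.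

Definition GammaX (x : X) : X -> Prop := fun u => leX x u.
Definition GammaY (w : Y) : Y -> Prop := fun v => leY w v.

Variable T : Y -> X -> Y -> Prop.

Definition Tp (u x : X) (v : Y) : Prop := forall y, T y x v -> perp u y.

Record implicative_frame : Prop := {
  X_nonempty : inhabited X;
  Y_nonempty : inhabited Y;
  F0 : forall x y, perp x y <-> (forall u, Tp u x y);
  F1X : forall x z, leX x z -> leX z x -> x = z;
  F1Y : forall y v, leY y v -> leY v y -> y = v;
  F2 : forall x v, exists w, seteq (fun y => T y x v) (GammaY w);
  F3 : forall y x v x1 v1, T y x v -> leX x1 x -> leY v1 v -> T y x1 v1;
  F4 : forall u x v, stable (fun x1 => Tp u x1 v) /\ costable (fun v1 => Tp u x v1)
}.

Definition Rd11 (v : Y) (z x : X) : Prop := Tp x z v.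
Definition R111 (u z x : X) : Prop := forall v, Rd11 v z x -> perp u v.
Definition R111set (x z : X) : X -> Prop := fun u => R111 u x z.

Definition Rle (u x z : X) : Prop := leX x u /\ leX z u.
Definition Rleset (x z : X) : X -> Prop := fun u => Rle u x z.

Definition tri (A : X -> Prop) (B : Y -> Prop) : Y -> Prop :=
  upper (lower (fun y => exists x v, A x /\ B v /\ T y x v)).
Definition imp (A C : X -> Prop) : X -> Prop := lower (tri A (upper C)).
Definition odot (A F : X -> Prop) : X -> Prop :=
  lower (upper (fun u => exists x1 z1, A x1 /\ F z1 /\ R111 u x1 z1)).

(* Completeness of G(X) as a lattice always holds
   (meets = intersections, joins = closures of unions); the Heyting property
   with ⇒ as the implication amounts to: ⇒ maps stable sets to stable sets
   and, for stable A B C,  A ∩ C ⊆ B  iff  C ⊆ A ⇒ B. *)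
Definition heyting_residual_of_cap : Prop :=
  (forall A B, stable A -> stable B -> stable (imp A B)) /\
  (forall A B C, stable A -> stable B -> stable C ->
     (incl (cap A C) B <-> incl C (imp A B))).

End Frames.

(* Main.v *)
Require Import Defs.
Set Implicit Arguments.

Section S.
Variables (X Y : Type) (perp : X -> Y -> Prop) (T : Y -> X -> Y -> Prop).

Lemma lower_stable (V : Y -> Prop) : stable perp (lower perp V).
Proof.
  intro a; split.
  - intros Ha y Hy; apply Hy; exact Ha.
  - intros Ha y Hy; apply Ha; intros x Hx; apply Hx; exact Hy.
Qed.

Lemma closure_incl (S C : X -> Prop) :
  stable perp C -> incl S C -> incl (lower perp (upper perp S)) C.
Proof.
  intros HC HS a Ha. apply (proj2 (HC a)). intros y Hy.
  apply Ha. intros x Hx. apply (proj1 (HC x) (HS x Hx)). exact Hy.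
Qed.

Lemma closure_ext (S : X -> Prop) : incl S (lower perp (upper perp S)).
Proof. intros a Ha y Hy; apply Hy; exact Ha. Qed.

Lemma upclosed (A : X -> Prop) x1 u :
  stable perp A -> A x1 -> leX perp x1 u -> A u.
Proof.
  intros HA H1 Hle. apply (proj2 (HA u)). intros y Hy.
  apply Hle. apply (proj1 (HA x1) H1). exact Hy.
Qed.

Lemma stable_cap (A C : X -> Prop) :
  stable perp A -> stable perp C -> stable perp (cap A C).
Proof.
  intros HA HC a; split.
  - intros Ha; apply closure_ext; exact Ha.
  - intros Ha; split.
    + apply (closure_incl HA (fun b (Hb : cap A C b) => proj1 Hb)); exact Ha.
    + apply (closure_incl HC (fun b (Hb : cap A C b) => proj2 Hb)); exact Ha.
Qed.

Lemma Gamma_stable x : stable perp (GammaX perp x).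
Proof.
  intro a; split.
  - intros Ha y Hy. apply Ha. apply Hy. intros y' H'; exact H'.
  - intros Ha y Hy. apply Ha. intros b Hb. unfold GammaX in Hb. apply Hb. exact Hy.
Qed.

Hypothesis HF : implicative_frame perp T.

Lemma R111_anti u x z x1 z1 :
  leX perp x x1 -> leX perp z z1 -> R111 perp T u x1 z1 -> R111 perp T u x z.
Proof.
  intros H1 H2 HR v Hv. apply HR. intros y Hy. apply H2. apply Hv.
  eapply (F3 HF). exact Hy. exact H1. intros w Hw; exact Hw.
Qed.

Lemma odot_Gamma x z :
  seteq (odot perp T (GammaX perp x) (GammaX perp z)) (R111set perp T x z).
Proof.
  intro a; split.
  - apply closure_incl.
    + apply lower_stable.
    + intros u [x1 [z1 [Hx [Hz HR]]]]. exact (R111_anti Hx Hz HR).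
  - intros Ha. apply closure_ext. exists x, z.
    split; [intros y Hy; exact Hy|]. split; [intros y Hy; exact Hy|]. exact Ha.
Qed.

Lemma residuation (A F C : X -> Prop) :
  stable perp C -> (incl (odot perp T A F) C <-> incl F (imp perp T A C)).
Proof.
  intros HC; split.
  - intros H z1 Hz1 y Hy. apply Hy.
    intros y' [x [v [HxA [Hv HT]]]].
    assert (Hcs := proj2 (F4 HF z1 x v)).
    cut (Tp perp T z1 x v). { intro Ht; apply Ht; exact HT. }
    apply (proj2 (Hcs v)). intros u Hu. apply Hv.
    apply H. apply closure_ext. exists x, z1. split; [exact HxA|]. split; [exact Hz1|].
    intros w Hw. apply Hu. exact Hw.
  - intros H. apply closure_incl; [exact HC|].
    intros u [x1 [z1 [HxA [Hz HR]]]].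
    apply (proj2 (HC u)). intros v Hv. apply HR.
    intros y HT. apply (H z1 Hz).
    intros w Hw. apply Hw. exists x1, v. split; [exact HxA|]. split; [exact Hv|]. exact HT.
Qed.

End S.

Theorem proposition3p14 (X Y : Type) (perp : X -> Y -> Prop)
  (T : Y -> X -> Y -> Prop) :
  implicative_frame perp T ->
  (forall x z : X,
     (incl (cap (GammaX perp x) (GammaX perp z))
           (odot perp T (GammaX perp x) (GammaX perp z))
      <-> incl (Rleset perp x z) (R111set perp T x z))
  /\ (incl (odot perp T (GammaX perp x) (GammaX perp z))
           (cap (GammaX perp x) (GammaX perp z))
      <-> incl (R111set perp T x z) (Rleset perp x z)))
  /\
  (heyting_residual_of_cap perp T
   <-> (forall x z : X, seteq (R111set perp T x z) (Rleset perp x z))).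
Proof.
  intros HF. split.
  - intros x z. pose proof (odot_Gamma HF x z) as E. split; split.
    + intros H u Hu. apply (proj1 (E u)). apply H. exact Hu.
    + intros H u Hu. apply (proj2 (E u)). apply H. exact Hu.
    + intros H u Hu. apply H. apply (proj2 (E u)). exact Hu.
    + intros H u Hu. apply H. apply (proj1 (E u)). exact Hu.
  - split.
    + intros [_ H2] x z.
      pose proof (odot_Gamma HF x z) as E.
      pose proof (Gamma_stable perp x) as Sx.
      pose proof (Gamma_stable perp z) as Sz.
      intro u; split.
      * intros Hu.
        assert (Hi : incl (odot perp T (GammaX perp x) (GammaX perp z))
                          (cap (GammaX perp x) (GammaX perp z))).
        { apply (residuation HF). apply stable_cap; assumption.
          apply (proj1 (H2 _ _ _ Sx (stable_cap Sx Sz) Sz)).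
          intros a Ha; exact Ha. }
        apply Hi. apply (proj2 (E u)). exact Hu.
      * intros Hu.
        assert (Hi : incl (cap (GammaX perp x) (GammaX perp z))
                          (odot perp T (GammaX perp x) (GammaX perp z))).
        { apply (proj2 (H2 _ _ _ Sx (lower_stable _ _) Sz)).
          apply (proj1 (residuation HF _ _ (lower_stable _ _))).
          intros a Ha; exact Ha. }
        apply (proj1 (E u)). apply Hi. exact Hu.
    + intros HR. split.
      * intros A B _ _. apply lower_stable.
      * intros A B C SA SB SC.
        assert (E : seteq (odot perp T A C) (cap A C)).
        { intro a; split.
          - apply closure_incl. apply stable_cap; assumption.
            intros u [x1 [z1 [Hx [Hz Hr]]]].
            destruct (proj1 (HR x1 z1 u) Hr) as [L1 L2].
            split; [exact (upclosed SA Hx L1) | exact (upclosed SC Hz L2)].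
          - intros [Ha Hc]. apply closure_ext. exists a, a.
            split; [exact Ha|]. split; [exact Hc|].
            apply (proj2 (HR a a a)). split; intros y Hy; exact Hy. }
        pose proof (residuation HF A C SB) as Rz. split.
        -- intros H. apply (proj1 Rz). intros u Hu. apply H. apply (proj1 (E u)). exact Hu.
        -- intros H u Hu. apply (proj2 Rz H). apply (proj2 (E u)). exact Hu.
Qed.
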